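(* Let $s\ge0$ be a constant, let $K_s=\frac{1+\sqrt{2}}{3}-\frac{\sqrt{4+2\sqrt{2}}}{4}+\frac{2-\sqrt{2}}{6}s$ and $\epsilon_0=\frac{2-\sqrt2}{6}$. Let $(M,g)$ be a complete oriented four-dimensional Einstein manifold with nonnegative sectional curvature and $\mathrm{Ric}=g$, such that $K_{ik}+sK_{ij}\ge K_s$ for every orthonormal basis $\{e_i\}$ of every tangent space and all distinct $i,j,k$ with $K_{ik}\ge K_{ij}$. Fix $o\in M$ and a Berger basis at $o$ (see context), with $a_1,a_2,a_3,c_1,c_2,c_3,I$ defined from it as in the context, and suppose the minimal sectional curvature at $o$ satisfies $K_{12}\le \epsilon_0-\epsilon$ for a constant $\epsilon>0$. Then: (1) if $a_2\ge0$ and $c_2\ge0$, then $I>\frac83\epsilon$; (2) if $a_2<0$ or $c_2<0$, then $I>\epsilon$.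
   Context: Curvature conventions: $R_{ijkl}=R(e_i,e_j,e_k,e_l)$ with $K_{ij}=R_{ijij}$ the sectional curvature of the plane spanned by $e_i,e_j$. A Berger basis at $o$ is a positively oriented orthonormal basis $\{e_i\}$ of $T_oM$ such that: (1) $K_{12}=\min\{K(\pi):\pi\subset T_oM\}$; (2) $K_{14}=\max\{K(\pi):\pi\subset T_oM\}$; (3) $R_{ikjk}=0$ for all $i\ne j$; (4) $|R_{1342}-R_{1234}|\le K_{13}-K_{12}$, $|R_{1423}-R_{1342}|\le K_{14}-K_{13}$, $|R_{1423}-R_{1234}|\le K_{14}-K_{12}$ (such a basis exists at every point of an oriented Einstein four-manifold, by Berger). Define $a_1=2(K_{12}+R_{1234})$, $a_2=2(K_{13}+R_{1342})$, $a_3=2(K_{14}+R_{1423})$, $c_1=2(K_{12}-R_{1234})$, $c_2=2(K_{13}-R_{1342})$, $c_3=2(K_{14}-R_{1423})$; these are the eigenvalues of the curvature operator restricted to self-dual and anti-self-dual 2-forms respectively, with $a_1\le a_2\le a_3$ and $c_1\le c_2\le c_3$. Define $$I=(c_2-c_1)c_3+(c_3-c_1)c_2+(a_2-a_1)a_3+(a_3-a_1)a_2 .$$ *)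

(* Defs.v *)
From HB Require Import structures.
From mathcomp Require Import all_boot all_order all_algebra.
From mathcomp Require Import reals.
Set Implicit Arguments. Unset Strict Implicit. Unset Printing Implicit Defensive.
Import Order.TTheory GRing.Theory Num.Theory.
Local Open Scope ring_scope.

Section Curv.
Variable R : realType.

(* A (0,4)-tensor on T_oM = R^4 (with g = Euclidean inner product),
   given by its components in the standard orthonormal frame. *)
Definition tensor4 := 'I_4 -> 'I_4 -> 'I_4 -> 'I_4 -> R.

Definition Rten (Rm : tensor4) (u v w z : 'rV[R]_4) : R :=
  \sum_(i < 4) \sum_(j < 4) \sum_(k < 4) \sum_(l < 4)
     u 0 i * v 0 j * w 0 k * z 0 l * Rm i j k l.

Definition dot (u v : 'rV[R]_4) : R := \sum_(i < 4) u 0 i * v 0 i.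

Definition orthonormal2 (u v : 'rV[R]_4) : Prop :=
  dot u u = 1 /\ dot v v = 1 /\ dot u v = 0.

(* sectional curvature of the plane spanned by an orthonormal pair u, v *)
Definition sec (Rm : tensor4) (u v : 'rV[R]_4) : R := Rten Rm u v u v.

Definition is_curvature_tensor (Rm : tensor4) : Prop :=
  forall i j k l,
    Rm i j k l = - Rm j i k l /\ Rm i j k l = - Rm i j l k /\
    Rm i j k l = Rm k l i j /\ Rm i j k l + Rm j k i l + Rm k i j l = 0.

Definition einstein_ric_eq_g (Rm : tensor4) : Prop :=
  forall i j : 'I_4, \sum_(k < 4) Rm i k j k = (i == j)%:R.

Definition nonneg_sec (Rm : tensor4) : Prop :=
  forall u v, orthonormal2 u v -> 0 <= sec Rm u v.

(* orthonormal bases: rows of E are e_1, ..., e_4 *)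
Definition orthonormal_basis (E : 'M[R]_4) : Prop := E *m E^T = 1%:M.

Definition Rc (Rm : tensor4) (E : 'M[R]_4) (i j k l : 'I_4) : R :=
  Rten Rm (row i E) (row j E) (row k E) (row l E).

Definition Kc (Rm : tensor4) (E : 'M[R]_4) (i j : 'I_4) : R := Rc Rm E i j i j.

(* paper indices 1,2,3,4 correspond to 0,1,2,3 *)
Definition i1 : 'I_4 := inord 0.
Definition i2 : 'I_4 := inord 1.
Definition i3 : 'I_4 := inord 2.
Definition i4 : 'I_4 := inord 3.

Definition Ks (s : R) : R :=
  (1 + Num.sqrt 2) / 3 - Num.sqrt (4 + 2 * Num.sqrt 2) / 4 + (2 - Num.sqrt 2) / 6 * s.

Definition eps0 : R := (2 - Num.sqrt 2) / 6.

Definition pinched (s : R) (Rm : tensor4) : Prop :=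
  forall E : 'M[R]_4, orthonormal_basis E ->
  forall i j k : 'I_4, i != j -> j != k -> i != k ->
    Kc Rm E i j <= Kc Rm E i k -> Ks s <= Kc Rm E i k + s * Kc Rm E i j.

Definition berger_basis (Rm : tensor4) (E : 'M[R]_4) : Prop :=
  [/\ orthonormal_basis E /\ 0 < \det E,
      (forall u v, orthonormal2 u v -> Kc Rm E i1 i2 <= sec Rm u v),
      (forall u v, orthonormal2 u v -> sec Rm u v <= Kc Rm E i1 i4),
      (forall i j k : 'I_4, i != j -> Rc Rm E i k j k = 0) &
      [/\ `|Rc Rm E i1 i3 i4 i2 - Rc Rm E i1 i2 i3 i4| <= Kc Rm E i1 i3 - Kc Rm E i1 i2,
          `|Rc Rm E i1 i4 i2 i3 - Rc Rm E i1 i3 i4 i2| <= Kc Rm E i1 i4 - Kc Rm E i1 i3 &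
          `|Rc Rm E i1 i4 i2 i3 - Rc Rm E i1 i2 i3 i4| <= Kc Rm E i1 i4 - Kc Rm E i1 i2]].

Definition a1 Rm E : R := 2 * (Kc Rm E i1 i2 + Rc Rm E i1 i2 i3 i4).
Definition a2 Rm E : R := 2 * (Kc Rm E i1 i3 + Rc Rm E i1 i3 i4 i2).
Definition a3 Rm E : R := 2 * (Kc Rm E i1 i4 + Rc Rm E i1 i4 i2 i3).
Definition c1 Rm E : R := 2 * (Kc Rm E i1 i2 - Rc Rm E i1 i2 i3 i4).
Definition c2 Rm E : R := 2 * (Kc Rm E i1 i3 - Rc Rm E i1 i3 i4 i2).
Definition c3 Rm E : R := 2 * (Kc Rm E i1 i4 - Rc Rm E i1 i4 i2 i3).

Definition Iq Rm E : R :=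
  (c2 Rm E - c1 Rm E) * c3 Rm E + (c3 Rm E - c1 Rm E) * c2 Rm E
  + (a2 Rm E - a1 Rm E) * a3 Rm E + (a3 Rm E - a1 Rm E) * a2 Rm E.

End Curv.

(* Main.v *)
Require Import Defs.
From HB Require Import structures.
From mathcomp Require Import all_boot all_order all_algebra.
From mathcomp Require Import reals.
From mathcomp Require Import ring lra.
Import Order.TTheory GRing.Theory Num.Theory.
Local Open Scope ring_scope.
Set Implicit Arguments. Unset Strict Implicit.

Lemma Qlow (R : realFieldType) (d1 d2 u w : R) :
  `|d1| <= u -> `|d2| <= w -> 2 * u <= w ->
  2*u^+2 - 2*u*w - w^+2 <= 2*d1^+2 + 2*d1*d2 - d2^+2.
Proof.
move=> h1 h2 h3.
have hp : - (`|d1| * `|d2|) <= d1 * d2.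
  by rewrite lerNl -normrM -normrN ler_norm.
have e1 : d1^+2 = `|d1|^+2 by rewrite real_normK ?num_real.
have e2 : d2^+2 = `|d2|^+2 by rewrite real_normK ?num_real.
rewrite e1 e2.
have n1 := normr_ge0 d1; have n2 := normr_ge0 d2.
move: (`|d1|) (`|d2|) h1 h2 hp n1 n2 => e D h1 h2 hp n1 n2.
have [hD|hD] := lerP (2*u) D.
- have k1 : 0 <= (u - e) * (D - e - u) by apply: mulr_ge0; lra.
  have k2 : 0 <= (w - D) * (w + D + 2*u) by apply: mulr_ge0; lra.
  nra.
- have k1 : 0 <= (2*e - D)^+2 by apply: sqr_ge0.
  have k2 : 0 <= (w - 2*u) * (w + 4*u) by apply: mulr_ge0; lra.
  have k3 : D^+2 <= 4 * u^+2 by nra.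
  nra.
Qed.

Lemma Qlow2 (R : realFieldType) (d1 d2 w : R) :
  `|d2| <= w -> -(3/2) * w^+2 <= 2*d1^+2 + 2*d1*d2 - d2^+2.
Proof.
move=> h2.
have hw : 0 <= w by apply: le_trans h2.
have [h2a h2b] : - w <= d2 /\ d2 <= w by split; [rewrite lerNl; apply: le_trans h2; rewrite -normrN ler_norm | apply: le_trans h2; rewrite ler_norm].
have k1 : 0 <= (2*d1 + d2)^+2 by apply: sqr_ge0.
have k2 : 0 <= (w - d2) * (w + d2) by apply: mulr_ge0; lra.
nra.
Qed.

Lemma Imain (R : realFieldType) (a b x y z p q r : R) :
  a^+2 = 2 -> b^+2 = 4 + 2*a ->
  141/100 <= a <= 142/100 -> 261/100 <= b <= 262/100 ->
  0 <= x -> x <= (2-a)/6 -> (4+a)/6 - b/4 <= x + y ->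
  x <= y -> y <= z -> x + y + z = 1 -> p + q + r = 0 ->
  `|q - p| <= y - x -> `|r - q| <= z - y ->
  3 * ((2-a)/6 - x) <=
  (2*(y - q) - 2*(x - p)) * (2*(z - r)) + (2*(z - r) - 2*(x - p)) * (2*(y - q))
  + (2*(y + q) - 2*(x + p)) * (2*(z + r)) + (2*(z + r) - 2*(x + p)) * (2*(y + q)).
Proof.
move=> ha hb /andP[ha1 ha2] /andP[hb1 hb2] hx0 hxe hL hxy hyz hs hR h1 h2.
have ez : z = 1 - x - y by lra.
have er : r = - p - q by lra.
set Q := 2*(q-p)^+2 + 2*(q-p)*(r-q) - (r-q)^+2.
have eI : (2*(y - q) - 2*(x - p)) * (2*(z - r)) + (2*(z - r) - 2*(x - p)) * (2*(y - q))
  + (2*(y + q) - 2*(x + p)) * (2*(z + r)) + (2*(z + r) - 2*(x + p)) * (2*(y + q))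
  = 16*y*z - 8*x*(1-x) + 8/3 * Q.
  by rewrite /Q ez er; field.
rewrite eI.
have [hA|hB] := lerP (4*y) (1+x).
- have hQ : 2*(y-x)^+2 - 2*(y-x)*(z-y) - (z-y)^+2 <= Q.
    by apply: (@Qlow _ (q-p) (r-q) (y-x) (z-y) h1 h2); lra.
  set t := (2-a)/6 - x.
  set v := x + y - ((4+a)/6 - b/4).
  have ex : x = (2-a)/6 - t by rewrite /t; ring.
  have ey : y = (4+a)/6 - b/4 + v - (2-a)/6 + t by rewrite /v /t; ring.
  have ht : 0 <= t by rewrite /t; lra.
  have hv : 0 <= v by rewrite /v; lra.
  have hv2 : v <= 13/100 by rewrite /v; lra.
  have H1 : 0 <= t*(a - 141/100) by apply: mulr_ge0; lra.
  have H2 : 0 <= t*(262/100 - b) by apply: mulr_ge0; lra.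
  have H3 : 0 <= v*(b - 261/100) by apply: mulr_ge0; lra.
  have H4 : 0 <= v*(13/100 - v) by apply: mulr_ge0; lra.
  have H5 : 0 <= t*v by apply: mulr_ge0.
  have H6 : 0 <= t*t by apply: mulr_ge0.
  suff : 3 * t <= 16*y*z - 8*x*(1-x) + 8/3 * (2*(y-x)^+2 - 2*(y-x)*(z-y) - (z-y)^+2).
    move=> H; lra.
  rewrite ez ex ey.
  nra.
- have hQ : -(3/2) * (z-y)^+2 <= Q by apply: (@Qlow2 _ (q-p) (r-q) (z-y) h2).
  have K1 : 0 <= (y - (1+x)/4) * ((1-x)/2 - y) by apply: mulr_ge0; lra.
  have K2 : 0 <= x * (1/10 - x) by apply: mulr_ge0; lra.
  suff : 3 * ((2-a)/6 - x) <= 16*y*z - 8*x*(1-x) - 4 * (z-y)^+2.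
    move=> H; lra.
  rewrite ez.
  nra.
Qed.

Lemma Lder (R : realFieldType) (s x y K0 e0 : R) : 0 <= s -> x <= e0 -> e0 <= K0 ->
  K0 + e0 * s <= y + s * x -> K0 + e0 * s <= (x + y) / 2 + s * ((x + y) / 2) ->
  K0 + e0 <= x + y.
Proof.
move=> hs hx hK h1 h2.
have [hs1|hs1] := lerP s 1.
- have k1 : 0 <= (1 - s) * (K0 - e0) by apply: mulr_ge0; lra.
  rewrite leNgt; apply/negP => hc.
  have k2 : 0 < (1 + s) * (K0 + e0 - (x + y)) by apply: mulr_gt0; lra.
  nra.
- have k1 : 0 <= (s - 1) * (e0 - x) by apply: mulr_ge0; lra.
  nra.
Qed.

Lemma sqrt_bounds (R : realFieldType) (a b : R) : 0 <= a -> 0 <= b -> a^+2 = 2 -> b^+2 = 4 + 2*a ->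
  (141/100 <= a <= 142/100) /\ (261/100 <= b <= 262/100).
Proof.
move=> ha hb h1 h2.
have A1 : 141/100 <= a by rewrite leNgt; apply/negP => c; nra.
have A2 : a <= 142/100 by rewrite leNgt; apply/negP => c; nra.
have B1 : 261/100 <= b by rewrite leNgt; apply/negP => c; nra.
have B2 : b <= 262/100 by rewrite leNgt; apply/negP => c; nra.
by rewrite A1 A2 B1 B2.
Qed.
Section Geo.
Variable R : realType.
Implicit Types (Rm : tensor4 R) (u v w z : 'rV[R]_4).

Lemma cyc3 (F : 'I_4 -> 'I_4 -> 'I_4 -> R) :
  \sum_(j < 4) \sum_(k < 4) \sum_(l < 4) F j k l =
  \sum_(j < 4) \sum_(k < 4) \sum_(l < 4) F k l j.
Proof.
rewrite [RHS]exchange_big /=; apply: eq_bigr => k _.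
by rewrite exchange_big.
Qed.

Lemma RtenN12 Rm u v w z : is_curvature_tensor Rm ->
  Rten Rm u v w z = - Rten Rm v u w z.
Proof.
move=> hR; rewrite /Rten [in RHS]exchange_big /= -sumrN; apply: eq_bigr => i _.
rewrite -sumrN; apply: eq_bigr => j _.
rewrite -sumrN; apply: eq_bigr => k _.
rewrite -sumrN; apply: eq_bigr => l _.
have [h _] := hR i j k l. rewrite h; ring.
Qed.

Lemma RtenN34 Rm u v w z : is_curvature_tensor Rm ->
  Rten Rm u v w z = - Rten Rm u v z w.
Proof.
move=> hR; rewrite /Rten -sumrN; apply: eq_bigr => i _.
rewrite -sumrN; apply: eq_bigr => j _.
rewrite [in RHS]exchange_big /= -sumrN; apply: eq_bigr => k _.
rewrite -sumrN; apply: eq_bigr => l _.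
have [_ [h _]] := hR i j k l. rewrite h; ring.
Qed.

Lemma RtenS Rm u v w z : is_curvature_tensor Rm ->
  Rten Rm u v w z = Rten Rm v u z w.
Proof. by move=> hR; rewrite RtenN12 // RtenN34 // opprK. Qed.

Lemma RtenB Rm u v w z : is_curvature_tensor Rm ->
  Rten Rm u v w z + Rten Rm u w z v + Rten Rm u z v w = 0.
Proof.
move=> hR; rewrite /Rten -!big_split /= big1 // => i _.
rewrite [X in _ + X + _]cyc3 [X in _ + _ + X]cyc3 [X in _ + _ + X]cyc3.
rewrite -!big_split /= big1 // => j _.
rewrite -!big_split /= big1 // => k _.
rewrite -!big_split /= big1 // => l _.
have [h1 _] := hR k i j l.
have [_ [h2 _]] := hR i k j l.
have [_ [_ [h3 _]]] := hR j k i l.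
have [_ [_ [_ h4]]] := hR i j k l.
have e : Rm i j k l + Rm i k l j + Rm i l j k = 0 by lra.
transitivity (u 0 i * v 0 j * w 0 k * z 0 l * (Rm i j k l + Rm i k l j + Rm i l j k)).
  by ring.
by rewrite e mulr0.
Qed.

Lemma RtenL2 Rm u v1 v2 w z (c1 c2 : R) :
  Rten Rm u (c1 *: v1 + c2 *: v2) w z = c1 * Rten Rm u v1 w z + c2 * Rten Rm u v2 w z.
Proof.
rewrite /Rten !mulr_sumr -big_split /=; apply: eq_bigr => i _.
rewrite !mulr_sumr -big_split /=; apply: eq_bigr => j _.
rewrite !mulr_sumr -big_split /=; apply: eq_bigr => k _.
rewrite !mulr_sumr -big_split /=; apply: eq_bigr => l _.
rewrite !mxE; ring.
Qed.

Lemma RtenL4 Rm u v w z1 z2 (c1 c2 : R) :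
  Rten Rm u v w (c1 *: z1 + c2 *: z2) = c1 * Rten Rm u v w z1 + c2 * Rten Rm u v w z2.
Proof.
rewrite /Rten !mulr_sumr -big_split /=; apply: eq_bigr => i _.
rewrite !mulr_sumr -big_split /=; apply: eq_bigr => j _.
rewrite !mulr_sumr -big_split /=; apply: eq_bigr => k _.
rewrite !mulr_sumr -big_split /=; apply: eq_bigr => l _.
rewrite !mxE; ring.
Qed.

Lemma sum4 (F : 'I_4 -> R) : \sum_(k < 4) F k = F i1 + F i2 + F i3 + F i4.
Proof.
rewrite !big_ord_recl big_ord0 addr0 !addrA.
congr (F _ + F _ + F _ + F _); apply: val_inj; by rewrite /= inordK.
Qed.

Lemma dot_rows (E : 'M[R]_4) i j : orthonormal_basis E ->
  dot (row i E) (row j E) = (i == j)%:R.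
Proof.
move=> hE; have := congr1 (fun M : 'M[R]_4 => M i j) (hE : E *m E^T = 1%:M); rewrite /= !mxE => <-.
rewrite /dot; apply: eq_bigr => k _; by rewrite !mxE.
Qed.

Lemma trace_frame Rm (E : 'M[R]_4) u w : einstein_ric_eq_g Rm -> orthonormal_basis E ->
  \sum_(m < 4) Rten Rm u (row m E) w (row m E) = dot u w.
Proof.
move=> hEin hE.
have hE' : E^T *m E = 1%:M by apply: mulmx1C.
rewrite /Rten exchange_big /=; apply: eq_bigr => i _.
rewrite exchange_big /=.
transitivity (\sum_(j < 4) \sum_(k < 4) u 0 i * w 0 k * \sum_(l < 4) Rm i j k l * (j == l)%:R).
  apply: eq_bigr => j _; rewrite exchange_big /=; apply: eq_bigr => k _.
  rewrite exchange_big /= mulr_sumr; apply: eq_bigr => l _.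
  have := congr1 (fun M : 'M[R]_4 => M j l) hE'; rewrite /= !mxE => <-.
  rewrite !mulr_sumr; apply: eq_bigr => m _; rewrite !mxE; ring.
transitivity (\sum_(k < 4) u 0 i * w 0 k * (i == k)%:R).
  rewrite exchange_big /=; apply: eq_bigr => k _.
  rewrite -mulr_sumr; congr (_ * _); rewrite -(hEin i k); apply: eq_bigr => j _.
  rewrite (bigD1 j) //= eqxx mulr1 big1 ?addr0 // => l /negPf; rewrite eq_sym => ->.
  by rewrite mulr0.
rewrite (bigD1 i) //= eqxx mulr1 big1 ?addr0 // => k /negPf; rewrite eq_sym => ->.
by rewrite mulr0.
Qed.


Definition hh : R := Num.sqrt (1/2).
Lemma hh2 : hh * hh = 1/2.
Proof. by rewrite /hh -expr2 sqr_sqrtr // divr_ge0. Qed.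

Definition gval (m n : nat) : R :=
  match m, n with
  | 0, 0 => 1 | 1, 1 => hh | 1, 2 => hh | 2, 1 => - hh | 2, 2 => hh | 3, 3 => 1
  | _, _ => 0 end.
Definition G : 'M[R]_4 := \matrix_(i < 4, j < 4) gval i j.

Lemma GGT : G *m G^T = 1%:M.
Proof.
apply/matrixP => i j; rewrite !mxE sum4 !mxE /i1 /i2 /i3 /i4 !inordK //.
have h := hh2.
case: i => [[|[|[|[|m]]]] Hi] //; case: j => [[|[|[|[|n]]]] Hj] //=; lra.
Qed.

Lemma rowG1 (E : 'M[R]_4) : row i1 (G *m E) = row i1 E.
Proof.
apply/rowP => k; rewrite !mxE sum4 !mxE.
rewrite /i1 /i2 /i3 /i4 !inordK //=; lra.
Qed.

Lemma rowG2 (E : 'M[R]_4) : row i2 (G *m E) = hh *: row i2 E + hh *: row i3 E.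
Proof.
apply/rowP => k; rewrite !mxE sum4 !mxE.
rewrite /i1 /i2 /i3 /i4 !inordK //=; lra.
Qed.

Lemma rowG3 (E : 'M[R]_4) : row i3 (G *m E) = (- hh) *: row i2 E + hh *: row i3 E.
Proof.
apply/rowP => k; rewrite !mxE sum4 !mxE.
rewrite /i1 /i2 /i3 /i4 !inordK //=; lra.
Qed.

Lemma GE_on (E : 'M[R]_4) : orthonormal_basis E -> orthonormal_basis (G *m E).
Proof.
rewrite /orthonormal_basis => hE.
by rewrite trmx_mul mulmxA -(mulmxA G) hE mulmx1 GGT.
Qed.


Lemma i12 : i1 != i2. Proof. by rewrite /i1 /i2 -val_eqE /= !inordK. Qed.
Lemma i13 : i1 != i3. Proof. by rewrite /i1 /i3 -val_eqE /= !inordK. Qed.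
Lemma i14 : i1 != i4. Proof. by rewrite /i1 /i4 -val_eqE /= !inordK. Qed.
Lemma i23 : i2 != i3. Proof. by rewrite /i2 /i3 -val_eqE /= !inordK. Qed.

Lemma KG Rm (E : 'M[R]_4) : is_curvature_tensor Rm ->
  (forall i j k : 'I_4, i != j -> Rc Rm E i k j k = 0) ->
  (Kc Rm (G *m E) i1 i2 = (Kc Rm E i1 i2 + Kc Rm E i1 i3) / 2) /\
  (Kc Rm (G *m E) i1 i3 = (Kc Rm E i1 i2 + Kc Rm E i1 i3) / 2).
Proof.
move=> hR h3.
have c1 : Rten Rm (row i1 E) (row i2 E) (row i1 E) (row i3 E) = 0.
  by rewrite RtenS //; apply: (h3 i2 i3 i1 i23).
have c2 : Rten Rm (row i1 E) (row i3 E) (row i1 E) (row i2 E) = 0.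
  by rewrite RtenS //; apply: (h3 i3 i2 i1); rewrite eq_sym i23.
have h := hh2.
rewrite /Kc /Rc rowG1 rowG2 rowG3 !RtenL2 !RtenL4 c1 c2.
rewrite !mulr0 !addr0 !add0r !mulrA mulrNN h; split; lra.
Qed.

End Geo.

Theorem lemma4p1 (R : realType) (s : R) (Rm : tensor4 R) (E : 'M[R]_4) (eps : R) :
  0 <= s ->
  is_curvature_tensor Rm ->
  einstein_ric_eq_g Rm ->
  nonneg_sec Rm ->
  pinched s Rm ->
  berger_basis Rm E ->
  0 < eps ->
  Kc Rm E i1 i2 <= eps0 R - eps ->
  ((0 <= a2 Rm E /\ 0 <= c2 Rm E -> 8 / 3 * eps < Iq Rm E) /\
   (a2 Rm E < 0 \/ c2 Rm E < 0 -> eps < Iq Rm E)).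
Proof.
move=> hs hR hEin hnn hpin [[hE hdet] hB1 hB2 hB3 [h41 h42 h43]] heps hx.
have on12 : orthonormal2 (row i1 E) (row i2 E).
  by rewrite /orthonormal2 !dot_rows // !eqxx (negPf i12).
have hx0 : 0 <= Kc Rm E i1 i2 by apply: hnn on12.
have hsum : Kc Rm E i1 i2 + Kc Rm E i1 i3 + Kc Rm E i1 i4 = 1.
  have := trace_frame (row i1 E) (row i1 E) hEin hE.
  rewrite sum4 dot_rows // eqxx.
  have e0 : Rten Rm (row i1 E) (row i1 E) (row i1 E) (row i1 E) = 0.
    have := RtenN12 (row i1 E) (row i1 E) (row i1 E) (row i1 E) hR; lra.
  rewrite e0 add0r => H; rewrite -[RHS]/(true%:R : R) -H /Kc /Rc; lra.
have hR0 : Rc Rm E i1 i2 i3 i4 + Rc Rm E i1 i3 i4 i2 + Rc Rm E i1 i4 i2 i3 = 0.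
  exact: RtenB.
have hxy : Kc Rm E i1 i2 <= Kc Rm E i1 i3.
  by move: (le_trans (normr_ge0 _) h41); rewrite subr_ge0.
have hyz : Kc Rm E i1 i3 <= Kc Rm E i1 i4.
  by move: (le_trans (normr_ge0 _) h42); rewrite subr_ge0.
have P2 := hpin E hE i1 i2 i3 i12 i23 i13 hxy.
have [k12 k13] := KG hR hB3.
have P1 := hpin (G R *m E) (GE_on hE) i1 i2 i3 i12 i23 i13 ltac:(by rewrite k12 k13).
rewrite k12 k13 in P1.
set a := Num.sqrt (2 : R).
set b := Num.sqrt (4 + 2 * a).
have ha0 : 0 <= a by apply: sqrtr_ge0.
have hb0 : 0 <= b by apply: sqrtr_ge0.
have ha2 : a^+2 = 2 by rewrite sqr_sqrtr.
have hb2 : b^+2 = 4 + 2*a by rewrite sqr_sqrtr //; lra.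
have [/andP[A1 A2] /andP[B1 B2]] := sqrt_bounds ha0 hb0 ha2 hb2.
move: P1 P2 hx; rewrite /Ks /eps0 -/a -/b => P1 P2 hx.
have hL := Lder (x := Kc Rm E i1 i2) (y := Kc Rm E i1 i3) (K0 := (1 + a) / 3 - b / 4)
  (e0 := (2 - a) / 6) hs ltac:(lra) ltac:(lra) P2 P1.
have hxe : Kc Rm E i1 i2 <= (2 - a) / 6 by lra.
have hL' : (4 + a) / 6 - b / 4 <= Kc Rm E i1 i2 + Kc Rm E i1 i3 by lra.
have hI := Imain ha2 hb2 ltac:(by rewrite A1 A2) ltac:(by rewrite B1 B2) hx0 hxe hL'
  hxy hyz hsum hR0 h41 h42.
have hI' : 3 * ((2 - a) / 6 - Kc Rm E i1 i2) <= Iq Rm E by exact: hI.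
move: hI' hx heps; move: (Iq Rm E) (Kc Rm E i1 i2) => I x hI' hx heps.
split => _; lra.
Qed.
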